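(* Let $d\ge2$, $\omega:=\frac1{\sqrt d}\sum_{i=1}^de_i\otimes e_i$, $P_\omega:=\omega\omega^\ast$, and for $\alpha\in[1,d]$ let $f_d(\alpha):=\mu_\alpha(P_\omega)$ and $t^\ast_\alpha:=\frac{k+\theta^2}{(k+\theta)^2}$, where $k=\lfloor\alpha\rfloor$, $\theta=\alpha-k$. Then $f_d(\alpha)=\frac{1}{d\,t^\ast_\alpha}$ for every $\alpha\in[1,d]$. In particular, along the maps $\Phi_t(X)=\mathrm{Tr}(X)I_d-tX$, $t\in(0,1]$, one has $\Phi_t\in\mathsf P_\alpha$ if and only if $t\le 1/(d f_d(\alpha))$.
   Context: Schmidt coefficients $s_1(\psi)\ge\dots\ge s_d(\psi)\ge0$ of $\psi=\sum a_{ij}e_i\otimes e_j\in\mathbb C^d\otimes\mathbb C^d$ are the singular values of $[a_{ij}]$. For $\alpha\in[1,d]$ with $k=\lfloor\alpha\rfloor$, $\theta=\alpha-k$, $r=\lceil\alpha\rceil$, a unit vector $\psi$ is $\alpha$-admissible if $s_j(\psi)=0$ for $j\ge r+1$ and, when $\theta>0$, $s_{k+1}(\psi)\le\frac\theta k\sum_{j=1}^ks_j(\psi)$; $\mathcal V_\alpha$ is the set of these. For Hermitian $W$, $\mu_\alpha(W):=\max\{\langle\psi,W\psi\rangle:\psi\in\mathcal V_\alpha\}$. The Choi matrix is $C_\Phi=\sum_{i,j}E_{ij}\otimes\Phi(E_{ij})$, and a Hermitian-preserving $\Phi$ is in $\mathsf P_\alpha$ if $\langle\psi,C_\Phi\psi\rangle\ge0$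 for all $\psi\in\mathcal V_\alpha$. *)

(* Defs.v *)
From HB Require Import structures.
From mathcomp Require Import all_boot all_order all_algebra.
From mathcomp Require Import reals.
From mathcomp Require Import complex mxtens.
Set Implicit Arguments. Unset Strict Implicit. Unset Printing Implicit Defensive.
Import Order.TTheory GRing.Theory Num.Theory.
Local Open Scope ring_scope.
Local Open Scope complex_scope.

Section Defs.
Variable R : realType.
Local Notation C := R[i].

Definition adjmx {m n} (A : 'M[C]_(m, n)) : 'M[C]_(n, m) := (map_mx (@conjc R) A)^T.
Definition hermitianmx {n} (A : 'M[C]_n) : Prop := adjmx A = A.

Definition qform {n} (W : 'M[C]_n) (psi : 'cV[C]_n) : C := (adjmx psi *m W *m psi) 0 0.

Variable d : nat.

Definition ket (i : 'I_d) : 'cV[C]_d := delta_mx i 0.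

Definition vec_of (A : 'M[C]_d) : 'cV[C]_(d * d) :=
  \sum_(i < d) \sum_(j < d) A i j *: tensmx (ket i) (ket j).

(* s_1 >= ... >= s_d >= 0 are the singular values of A, i.e. the s_j^2 are
   the eigenvalues (with multiplicity) of A^* A *)
Definition schmidt_coeffs (A : 'M[C]_d) (s : 'I_d -> R) : Prop :=
  (forall i j : 'I_d, (i <= j)%N -> s j <= s i) /\
  (forall i, 0 <= s i) /\
  char_poly (adjmx A *m A) = \prod_(i < d) ('X - ((s i ^+ 2)%:C)%:P).

(* k = floor alpha, theta = alpha - k, r = ceil alpha (for alpha >= 1) *)
Definition kfl (alpha : R) : nat := Num.truncn alpha.
Definition theta (alpha : R) : R := alpha - (kfl alpha)%:R.
Definition rcl (alpha : R) : nat :=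
  if theta alpha == 0 then kfl alpha else (kfl alpha).+1.

(* psi in V_alpha (indices are 0-based: s_{j} (1-based) = s (j-1)) *)
Definition admissible (alpha : R) (psi : 'cV[C]_(d * d)) : Prop :=
  qform 1%:M psi = 1 /\
  exists (A : 'M[C]_d) (s : 'I_d -> R),
    psi = vec_of A /\ schmidt_coeffs A s /\
    (forall j : 'I_d, (rcl alpha <= j)%N -> s j = 0) /\
    (0 < theta alpha ->
       forall j : 'I_d, nat_of_ord j = kfl alpha ->
         s j <= theta alpha / (kfl alpha)%:R *
                \sum_(i < d | (i < kfl alpha)%N) s i).

Definition is_mu (alpha : R) (W : 'M[C]_(d * d)) (m : R) : Prop :=
  (exists psi, admissible alpha psi /\ qform W psi = m%:C) /\
  (forall psi, admissible alpha psi -> qform W psi <= m%:C).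

Definition omega : 'cV[C]_(d * d) :=
  ((Num.sqrt (d%:R : R))^-1)%:C *: \sum_(i < d) tensmx (ket i) (ket i).
Definition Pomega : 'M[C]_(d * d) := omega *m adjmx omega.

Definition choi (Phi : 'M[C]_d -> 'M[C]_d) : 'M[C]_(d * d) :=
  \sum_(i < d) \sum_(j < d) tensmx (delta_mx i j) (Phi (delta_mx i j)).

Definition herm_preserving (Phi : 'M[C]_d -> 'M[C]_d) : Prop :=
  forall X, hermitianmx X -> hermitianmx (Phi X).

Definition in_P (alpha : R) (Phi : 'M[C]_d -> 'M[C]_d) : Prop :=
  herm_preserving Phi /\
  forall psi, admissible alpha psi -> 0 <= qform (choi Phi) psi.

Definition Phi_t (t : R) (X : 'M[C]_d) : 'M[C]_d :=
  (\tr X) *: 1%:M - t%:C *: X.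

End Defs.

Definition tstar {R : realType} (alpha : R) : R :=
  ((kfl alpha)%:R + theta alpha ^+ 2) / ((kfl alpha)%:R + theta alpha) ^+ 2.

(* Main.v *)
Require Import Defs.
From HB Require Import structures.
From mathcomp Require Import all_boot all_order all_algebra.
From mathcomp Require Import reals.
From mathcomp Require Import complex mxtens.
From mathcomp Require Import spectral.
From mathcomp Require Import ring lra.
Import Order.TTheory GRing.Theory Num.Theory.
Local Open Scope ring_scope.
Local Open Scope complex_scope.

Section RealPart.
Local Close Scope complex_scope.
End RealPart.

Section Real.
Variable R : realType.

Lemma poly_ineq (k t S x Q1 : R) : 1 <= k -> 0 < t -> t < 1 -> 0 <= S -> 0 <= x ->
  k * x <= t * S -> S ^+ 2 <= k * Q1 ->
  (S + x) ^+ 2 * (k + t ^+ 2) <= (k + t) ^+ 2 * (Q1 + x ^+ 2).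
Proof.
move=> hk ht0 ht1 hS hx hxs hQ.
have G : 0 <= (t * S - k * x) * ((2 * k + t - k * t) * S - k * (k - 1 + 2 * t) * x).
  apply: mulr_ge0; first lra.
  have h1 : k * (k - 1 + 2 * t) * x <= (k - 1 + 2 * t) * (t * S).
    have -> : k * (k - 1 + 2 * t) * x = (k - 1 + 2 * t) * (k * x) by ring.
    by apply: ler_wpM2l => //; lra.
  have h2 : 0 <= S * ((k + t) * (1 - t)) by apply: mulr_ge0 => //; apply: mulr_ge0; lra.
  nra.
have hk0 : 0 < k by lra.
rewrite -(ler_pM2l hk0).
have h3 : (k + t) ^+ 2 * S ^+ 2 <= (k + t) ^+ 2 * (k * Q1).
  by apply: ler_wpM2l => //; apply: sqr_ge0.
nra.
Qed.

Lemma qmam (I : Type) (r : seq I) (P : pred I) (f : I -> R) :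
  (\sum_(i <- r | P i) f i) ^+ 2 <=
  (\sum_(i <- r | P i) 1) * \sum_(i <- r | P i) f i ^+ 2.
Proof.
elim: r => [|x r IH]; first by rewrite !big_nil mul0r expr0n.
rewrite !big_cons; case: (P x) => //.
set S := \sum_(i <- r | P i) f i in IH *.
set n := \sum_(i <- r | P i) (1 : R) in IH *.
set Q := \sum_(i <- r | P i) f i ^+ 2 in IH *.
have hn : 0 <= n by rewrite /n sumr_ge0.
have hQ : 0 <= Q by rewrite /Q sumr_ge0 // => i _; rewrite sqr_ge0.
have [n0|npos] := eqVneq n 0.
  have : S ^+ 2 <= 0 by rewrite n0 mul0r in IH.
  rewrite n0; move=> hS; have S0 : S = 0.
    by apply/eqP; rewrite -sqrf_eq0 eq_le hS sqr_ge0.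
  rewrite S0; nra.
have np : 0 < n by rewrite lt_def npos hn.
suff : 2 * f x * S <= Q + n * f x ^+ 2 by nra.
rewrite -(ler_pM2l np).
have : 0 <= (S - n * f x) ^+ 2 by apply: sqr_ge0.
nra.
Qed.

Lemma sum_lt_const (d k : nat) (a : R) : (k <= d)%N ->
  \sum_(i < d | (i < k)%N) a = k%:R * a.
Proof.
move=> hkd; rewrite -(big_ord_widen d (fun _ => a) hkd) sumr_const card_ord.
by rewrite mulr_natl.
Qed.

Lemma opt_bound (d k : nat) (t : R) (s : 'I_d -> R) :
  (1 <= k)%N -> (k <= d)%N -> 0 <= t -> t < 1 -> (0 < t -> (k < d)%N) ->
  (forall i, 0 <= s i) ->
  (forall j : 'I_d, ((if t == 0%R then k else k.+1) <= j)%N -> s j = 0) ->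
  (0 < t -> forall j : 'I_d, nat_of_ord j = k ->
      s j <= t / k%:R * \sum_(i < d | (i < k)%N) s i) ->
  (\sum_i s i) ^+ 2 <= (k%:R + t) ^+ 2 / (k%:R + t ^+ 2) * \sum_i s i ^+ 2.
Proof.
move=> hk1 hkd ht0 ht1 hkt hs hz hth.
have hS2 : (\sum_(i < d | (i < k)%N) s i) ^+ 2 <= k%:R * \sum_(i < d | (i < k)%N) s i ^+ 2.
  have e := @sum_lt_const d k 1 hkd; rewrite mulr1 in e; rewrite -e; exact: qmam.
have hkR : 1 <= k%:R :> R by rewrite ler1n.
have hpos : 0 < k%:R + t ^+ 2 :> R by have := sqr_ge0 t; lra.
rewrite (bigID (fun i : 'I_d => (i < k)%N)) [X in _ * X](bigID (fun i : 'I_d => (i < k)%N)) /=.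
set S := \sum_(i < d | (i < k)%N) s i in hS2 hth *.
set Q1 := \sum_(i < d | (i < k)%N) s i ^+ 2 in hS2 *.
have hS : 0 <= S by rewrite /S sumr_ge0.
have [t0|tn0] := eqVneq t 0.
  rewrite big1; last first.
    by move=> i; rewrite -leqNgt => hi; apply: hz; rewrite t0 eqxx.
  rewrite t0 expr0n /= !addr0.
  have -> : k%:R ^+ 2 / k%:R = k%:R :> R.
    by rewrite expr2 mulfK //; apply/eqP => e; rewrite e in hkR; lra.
  have : 0 <= \sum_(i < d | ~~ (i < k)%N) s i ^+ 2 by rewrite sumr_ge0 // => i _; apply: sqr_ge0.
  nra.
have tp : 0 < t by rewrite lt_def tn0 ht0.
have hk : (k < d)%N := hkt tp.
pose jk := Ordinal hk.
have hjk : ~~ (jk < k)%N by rewrite /= ltnn.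
rewrite (bigD1 jk) //= [X in _ * (_ + X)](bigD1 jk) //=.
rewrite [X in (_ + (_ + X)) ^+ 2]big1; last first.
  move=> i /andP[hi hne]; apply: hz; rewrite (negbTE tn0).
  rewrite ltn_neqAle eq_sym; rewrite -leqNgt in hi; rewrite hi andbT.
  by apply: contra hne => /eqP e; apply/eqP/val_inj.
rewrite addr0.
set x := s jk.
set Rm := \sum_(i < d | ~~ (i < k)%N && (i != jk)) s i ^+ 2.
have hRm : 0 <= Rm by rewrite /Rm sumr_ge0 // => i _; apply: sqr_ge0.
have hx : x <= t / k%:R * S by apply: hth.
have hkx : k%:R * x <= t * S.
  have hk0 : 0 < k%:R :> R by lra.
  have e : k%:R * (t / k%:R * S) = t * S.
    by field; apply/eqP => e; rewrite e in hk0; lra.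
  by rewrite -e; apply: ler_wpM2l => //; lra.
rewrite mulrAC ler_pdivlMr //.
have := @poly_ineq _ _ _ _ _ hkR tp ht1 hS (hs jk) hkx hS2.
have : 0 <= (k%:R + t) ^+ 2 * Rm by apply: mulr_ge0 => //; apply: sqr_ge0.
rewrite /x => h1 h2.
have -> : (k%:R + t) ^+ 2 * (Q1 + (s jk ^+ 2 + Rm)) =
  (k%:R + t) ^+ 2 * (Q1 + s jk ^+ 2) + (k%:R + t) ^+ 2 * Rm by ring.
lra.
Qed.
End Real.

Set Implicit Arguments. Unset Strict Implicit. Unset Printing Implicit Defensive.

Section Mat.
Variable R : realType.
Local Notation C := R[i].
Variable d : nat.

Lemma sum_tens (F : 'I_(d * d) -> C) :
  \sum_k F k = \sum_i \sum_j F (mxtens_index (i, j)).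
Proof.
rewrite pair_big /=.
rewrite (reindex (@mxtens_index d d)) /=; last first.
  by exists (@mxtens_unindex d d) => x _; [apply: mxtens_indexK | apply: mxtens_unindexK].
by apply: eq_bigr => -[i j].
Qed.

Lemma ord1_eq (y z : 'I_1) : (y == z) = true.
Proof. by rewrite !ord1 eqxx. Qed.

Lemma sum_delta (F : 'I_d -> C) i : \sum_a (i == a)%:R * F a = F i.
Proof.
rewrite (bigD1 i) //= eqxx mul1r big1 ?addr0 // => a hne.
by rewrite eq_sym (negbTE hne) mul0r.
Qed.

Lemma vec_ofE (A : 'M[C]_d) i j : vec_of A (mxtens_index (i, j)) 0 = A i j.
Proof.
rewrite /vec_of summxE.
under eq_bigr => a _ do rewrite summxE.
rewrite -(sum_delta (fun a => A a j)).
apply: eq_bigr => a _.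
rewrite -(sum_delta (fun b => (i == a)%:R * A a b)).
apply: eq_bigr => b _.
rewrite !mxE !mxtens_indexK /= !ord1_eq !andbT.
by ring.
Qed.

Definition Om : 'cV[C]_(d * d) := \sum_(i < d) tensmx (ket R i) (ket R i).

Lemma OmE i j : Om (mxtens_index (i, j)) 0 = (i == j)%:R.
Proof.
rewrite /Om summxE.
under eq_bigr => a _ do rewrite !mxE !mxtens_indexK /= !ord1_eq !andbT.
rewrite (sum_delta (fun a => (j == a)%:R)).
by rewrite eq_sym.
Qed.

Lemma adjmx_mul m n p (X : 'M[C]_(m, n)) (Y : 'M[C]_(n, p)) :
  adjmx (X *m Y) = adjmx Y *m adjmx X.
Proof. by rewrite /adjmx map_mxM trmx_mul. Qed.

Lemma adjmxK m n (X : 'M[C]_(m, n)) : adjmx (adjmx X) = X.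
Proof.
by apply/matrixP => i j; rewrite !mxE conjcK.
Qed.

Lemma adjmxE m n (X : 'M[C]_(m, n)) i j : adjmx X i j = (X j i)^*.
Proof. by rewrite !mxE. Qed.

Lemma qform1 (psi : 'cV[C]_(d * d)) :
  qform 1%:M psi = \sum_k (psi k 0)^* * psi k 0.
Proof.
by rewrite /qform mulmx1 mxE; apply: eq_bigr => k _; rewrite adjmxE.
Qed.

Lemma qform_vec1 (A : 'M[C]_d) : qform 1%:M (vec_of A) = \tr (adjmx A *m A).
Proof.
rewrite qform1 sum_tens /mxtrace exchange_big /=.
apply: eq_bigr => i _; rewrite mxE; apply: eq_bigr => j _.
by rewrite !vec_ofE adjmxE.
Qed.

Lemma qform_rank1 (v psi : 'cV[C]_(d * d)) :
  qform (v *m adjmx v) psi = ((adjmx v *m psi) 0 0)^* * (adjmx v *m psi) 0 0.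
Proof.
rewrite /qform mulmxA -mulmxA -[adjmx psi *m v]adjmxK adjmx_mul adjmxK.
rewrite mxE.
by rewrite big_ord_recl big_ord0 addr0 adjmxE.
Qed.

Lemma Om_vec (A : 'M[C]_d) : (adjmx Om *m vec_of A) 0 0 = \tr A.
Proof.
rewrite mxE sum_tens /mxtrace; apply: eq_bigr => i _.
under eq_bigr => j _ do rewrite adjmxE OmE vec_ofE.
rewrite -[X in _ = X](sum_delta (fun j => A i j)); apply: eq_bigr => j _.
by rewrite conjc_nat.
Qed.

Lemma qform_Om (A : 'M[C]_d) :
  qform (Om *m adjmx Om) (vec_of A) = (\tr A)^* * \tr A.
Proof. by rewrite qform_rank1 Om_vec. Qed.


Lemma adjmxZ m n (a : C) (X : 'M[C]_(m, n)) : adjmx (a *: X) = a^* *: adjmx X.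
Proof. by apply/matrixP => i j; rewrite !mxE rmorphM. Qed.

Lemma qformZ (a : C) W (psi : 'cV[C]_(d * d)) : qform (a *: W) psi = a * qform W psi.
Proof. rewrite /qform -scalemxAr -scalemxAl mxE. reflexivity. Qed.

Lemma qformB W1 W2 (psi : 'cV[C]_(d * d)) :
  qform (W1 - W2) psi = qform W1 psi - qform W2 psi.
Proof. by rewrite /qform mulmxBr mulmxBl !mxE. Qed.

Lemma PomegaE : Pomega R d =
  (((Num.sqrt (d%:R : R))^-1) ^+ 2)%:C *: (Om *m adjmx Om).
Proof.
rewrite /Pomega /omega -/Om adjmxZ -scalemxAl -scalemxAr scalerA.
congr (_ *: _); simpc.
by rewrite expr2.
Qed.

Lemma natr_and (b1 b2 : bool) : (b1 && b2)%:R = b1%:R * b2%:R :> C.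
Proof. by case: b1; case: b2; rewrite ?mulr1 ?mulr0 ?mul1r. Qed.

Lemma sum_delta2 (F : 'I_d -> 'I_d -> C) i k :
  \sum_a \sum_b ((i == a) && (k == b))%:R * F a b = F i k.
Proof.
under eq_bigr => a _ do under eq_bigr => b _ do rewrite natr_and -mulrA.
under eq_bigr => a _ do rewrite -mulr_sumr sum_delta.
by rewrite (sum_delta (fun a => F a k)).
Qed.

Lemma tr_delta (i k : 'I_d) : \tr (delta_mx i k : 'M[C]_d) = (i == k)%:R.
Proof.
rewrite /mxtrace; under eq_bigr => a _ do rewrite mxE natr_and.
under eq_bigr => a _ do rewrite [a == i]eq_sym [a == k]eq_sym.
by rewrite (sum_delta (fun a => (k == a)%:R)) eq_sym.
Qed.

Lemma choiE t : choi (@Phi_t R d t) = 1%:M - t%:C *: (Om *m adjmx Om).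
Proof.
apply/matrixP => x y.
case: (mxtens_indexP x) => i j; case: (mxtens_indexP y) => k l.
rewrite /choi summxE.
under eq_bigr => a _ do rewrite summxE.
under eq_bigr => a _ do under eq_bigr => b _ do rewrite tensmxE.
rewrite !mxE.
under eq_bigr => a _ do under eq_bigr => b _ do rewrite mxE.
rewrite (sum_delta2 (fun a b => Phi_t t (delta_mx a b) j l)).
rewrite big_ord_recl big_ord0 addr0 adjmxE !ord1 !OmE conjc_nat.
rewrite /Phi_t !mxE tr_delta.
rewrite (inj_eq (can_inj (@mxtens_indexK d d))) xpair_eqE /=.
rewrite [j == i]eq_sym [l == k]eq_sym !natr_and.
done.
Qed.

Lemma herm_Phi t : herm_preserving (@Phi_t R d t).
Proof.
move=> X hX; rewrite /Defs.hermitianmx in hX *.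
have hc : forall a b, (X a b)^* = X b a.
  by move=> a b; rewrite -adjmxE hX.
have htr : (\tr X)^* = \tr X.
  by rewrite /mxtrace rmorph_sum; apply: eq_bigr => a _; apply: hc.
apply/matrixP => i j; rewrite adjmxE /Phi_t !mxE rmorphB !rmorphM /= htr hc.
by rewrite conjc_nat oppr0 eq_sym.
Qed.


Lemma adjT m n (X : 'M[C]_(m, n)) : (X ^t*)%sesqui = adjmx X.
Proof. by rewrite /adjmx map_trmx. Qed.

Lemma char_poly_conj (P X Q : 'M[C]_d) : Q *m P = 1%:M ->
  char_poly (Q *m X *m P) = char_poly X.
Proof.
move=> hQP.
rewrite /char_poly /char_poly_mx !map_mxM.
set Qp := map_mx polyC Q; set Pp := map_mx polyC P; set Xp := map_mx polyC X.
have hQPp : Qp *m Pp = 1%:M by rewrite -map_mxM hQP map_mx1.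
have eX : ('X%:M : 'M_d) = Qp *m 'X%:M *m Pp.
  by rewrite -mulmxA -scalar_mxC mulmxA hQPp mul1mx.
rewrite [X in \det (X - _)]eX -mulmxBl -mulmxBr !det_mulmx mulrAC -det_mulmx hQPp.
by rewrite det1 mul1r.
Qed.

Lemma trace_bound (A : 'M[C]_d) (s : 'I_d -> R) : schmidt_coeffs A s ->
  `|\tr A| <= (\sum_i s i)%:C /\ \tr (adjmx A *m A) = (\sum_i s i ^+ 2)%:C.
Proof.
case=> _ [hs hchar].
set B := adjmx A *m A.
have hB : adjmx B = B by rewrite adjmx_mul adjmxK.
have hN : B \is normalmx by apply/normalmxP; rewrite adjT hB.
have := @orthomx_spectralP _ _ B; rewrite hN => /(_ isT) hBe.
set P := spectralmx B in hBe; set D := spectral_diag B in hBe.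
have hPu : P \is unitarymx by apply: spectral_unitarymx.
have hPi : invmx P = adjmx P by rewrite invmx_unitary // adjT.
set Q := adjmx P in hPi.
rewrite hPi in hBe.
have hPQ : P *m Q = 1%:M by have /unitarymxP := hPu; rewrite adjT.
have hQP : Q *m P = 1%:M by rewrite -hPi mulVmx // unitarymx_unit.
have hQ : adjmx Q = P by rewrite adjmxK.
set M := P *m A *m Q.
have htr : \tr M = \tr A.
  by rewrite /M -mulmxA mxtrace_mulC -mulmxA hQP mulmx1.
have hMM : adjmx M *m M = diag_mx D.
  rewrite /M !adjmx_mul hQ -/B.
  have -> : P *m (adjmx A *m Q) *m (P *m A *m Q) = P *m B *m Q.
    by rewrite !mulmxA -(mulmxA _ Q P) hQP mulmx1.
  by rewrite hBe !mulmxA hPQ mul1mx -mulmxA hPQ mulmx1.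
pose D' := fun i : 'I_d => (D 0 i : C).
have hD' : forall i, D' i = \sum_j (M j i)^* * M j i.
  move=> i; rewrite /D'.
  have := congr1 (fun Z : 'M[C]_d => Z i i) hMM; rewrite /= [diag_mx D i i]mxE eqxx mulr1n => <-.
  by rewrite mxE; apply: eq_bigr => j _; rewrite adjmxE.
have hMi : forall i, `|M i i| ^+ 2 <= D' i.
  move=> i; rewrite hD' sqr_normc mulrC (bigD1 i) //= lerDl.
  by apply: sumr_ge0 => j _; rewrite mulrC mulcJ_ge0.
have hDge : forall i, 0 <= D' i.
  by move=> i; apply: (le_trans _ (hMi i)); rewrite exprn_ge0 // normr_ge0.
have hchar2 : char_poly B = \prod_i ('X - (D' i)%:P).
  rewrite [in LHS]hBe (char_poly_conj _ hQP) (char_poly_trig (diag_mx_is_trig D)).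
  by apply: eq_bigr => i _; rewrite mxE eqxx mulr1n.
rewrite hchar2 in hchar.
have hperm : perm_eq [seq D' i | i <- index_enum 'I_d]
                     [seq (s i ^+ 2)%:C | i <- index_enum 'I_d].
  by apply: prod_XsubC_eq; rewrite !big_map.
have hsum : forall g : C -> C, \sum_i g (D' i) = \sum_i g ((s i ^+ 2)%:C).
  move=> g; have := @perm_big _ (+%R : SemiGroup.com_law C) 0 _ _ _ predT g hperm.
  by rewrite !big_map.
split.
  rewrite -htr /mxtrace.
  apply: le_trans (ler_norm_sum _ _ _) _.
  apply: (@le_trans _ _ (\sum_i sqrtc (D' i))).
    apply: ler_sum => i _.
    have h1 : 0 <= `|M i i| by apply: normr_ge0.
    have h2 : 0 <= sqrtc (D' i) by rewrite sqrtc_ge0.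
    by rewrite -(ler_sqr h1 h2) sqr_sqrtc.
  rewrite hsum rmorph_sum le_eqVlt; apply/orP; left; apply/eqP; apply: eq_bigr => i _.
  rewrite sqrtc_sqrtr; last by rewrite lecR sqr_ge0.
  by rewrite /= sqrtr_sqr ger0_norm.
have -> : \tr B = \tr (diag_mx D).
  by rewrite [in LHS]hBe mxtrace_mulC mulmxA hPQ mul1mx.
rewrite mxtrace_diag.
have := hsum id; rewrite /= => ->.
by rewrite rmorph_sum.
Qed.

End Mat.

Section Main.
Variable R : realType.
Local Notation C := R[i].
Variable d : nat.

Definition Dg (r : 'I_d -> R) : 'M[C]_d := diag_mx (\row_i (r i)%:C).

Lemma conjR (x : R) : (x%:C)^* = x%:C.
Proof. by rewrite /= oppr0. Qed.

Lemma adj_Dg (r : 'I_d -> R) : adjmx (Dg r) = Dg r.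
Proof.
apply/matrixP => i j; rewrite adjmxE /Dg !mxE eq_sym.
have [->|_] := eqVneq i j; rewrite ?eqxx ?mulr1n ?mulr0n /= ?oppr0 //.
Qed.

Lemma Dg_sq (r : 'I_d -> R) : adjmx (Dg r) *m Dg r = Dg (fun i => r i ^+ 2).
Proof.
rewrite adj_Dg /Dg mulmx_diag; congr diag_mx; apply/rowP => j; rewrite !mxE.
by rewrite -rmorphM expr2.
Qed.

Lemma tr_Dg (r : 'I_d -> R) : \tr (Dg r) = (\sum_i r i)%:C.
Proof.
rewrite /Dg mxtrace_diag rmorph_sum; apply: eq_bigr => i _; by rewrite mxE.
Qed.

Lemma qformP (A : 'M[C]_d) :
  qform (Pomega R d) (vec_of A) =
  (((Num.sqrt (d%:R : R))^-1) ^+ 2)%:C * ((\tr A)^* * \tr A).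
Proof. by rewrite PomegaE qformZ qform_Om. Qed.


Lemma upper (k : nat) (t : R) (psi : 'cV[C]_(d * d)) (A : 'M[C]_d) (s : 'I_d -> R) :
  (1 <= k)%N -> (k <= d)%N -> 0 <= t -> t < 1 -> (0 < t -> (k < d)%N) ->
  qform 1%:M psi = 1 -> psi = vec_of A -> schmidt_coeffs A s ->
  (forall j : 'I_d, ((if t == 0%R then k else k.+1) <= j)%N -> s j = 0) ->
  (0 < t -> forall j : 'I_d, nat_of_ord j = k ->
     s j <= t / k%:R * \sum_(i < d | (i < k)%N) s i) ->
  qform (Pomega R d) psi <=
    ((Num.sqrt (d%:R : R))^-1 ^+ 2 * ((k%:R + t) ^+ 2 / (k%:R + t ^+ 2)))%:C.
Proof.
move=> hk1 hkd ht0 ht1 hkt h1 hpsi hsc hz hth; subst psi.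
have [hb htr] := trace_bound hsc.
rewrite qform_vec1 htr in h1.
have hQ : \sum_i s i ^+ 2 = 1 by apply: (@complexI R); rewrite h1.
have hs : forall i, 0 <= s i by case: hsc => _ [].
have hopt := @opt_bound R d k t s hk1 hkd ht0 ht1 hkt hs hz hth.
rewrite hQ mulr1 in hopt.
rewrite qformP [X in _ <= X]rmorphM; apply: ler_wpM2l.
  by rewrite lecR exprn_ge0 // invr_ge0 sqrtr_ge0.
rewrite mulrC -sqr_normc.
have hS : 0 <= \sum_i s i by apply: sumr_ge0.
apply: (@le_trans _ _ (((\sum_i s i) ^+ 2)%:C)).
  rewrite rmorphXn ler_sqr ?nnegrE ?normr_ge0 //.
  by rewrite lecR.
by rewrite lecR.
Qed.


Definition s0 (k : nat) (t a : R) (i : 'I_d) : R :=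
  if (i < k)%N then a else if (i == k :> nat) then t * a else 0.

Lemma s0_sum (k : nat) (t a : R) (f : R -> R) : f 0 = 0 -> (k <= d)%N ->
  (0 < t -> (k < d)%N) -> 0 <= t ->
  \sum_i f (s0 k t a i) = k%:R * f a + f (t * a).
Proof.
move=> f0 hkd hkt ht0.
rewrite (bigID (fun i : 'I_d => (i < k)%N)) /=.
have -> : \sum_(i < d | (i < k)%N) f (s0 k t a i) = k%:R * f a.
  rewrite -(@sum_lt_const R d k (f a) hkd); apply: eq_bigr => i hi.
  by rewrite /s0 hi.
congr (_ + _).
have [t0|tn0] := eqVneq t 0.
  rewrite t0 mul0r f0 big1 // => i hi; rewrite /s0 (negbTE hi).
  by case: ifP; rewrite ?mul0r.
have tp : 0 < t by rewrite lt_def tn0 ht0.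
pose jk := Ordinal (hkt tp).
rewrite (bigD1 jk) /=; last by rewrite ltnn.
rewrite big1 ?addr0; first by rewrite /s0 /= ltnn eqxx.
move=> i /andP[hi hne]; rewrite /s0 (negbTE hi).
have -> : (i == k :> nat) = false.
  by apply/negbTE; apply: contra hne => /eqP e; apply/eqP/val_inj.
done.
Qed.


Lemma witness (k : nat) (t : R) : (1 <= k)%N -> (k <= d)%N -> 0 <= t -> t < 1 ->
  (0 < t -> (k < d)%N) ->
  let a := (Num.sqrt (k%:R + t ^+ 2))^-1 in
  let A := Dg (s0 k t a) in
  [/\ qform 1%:M (vec_of A) = 1, schmidt_coeffs A (s0 k t a),
      (forall j : 'I_d, ((if t == 0%R then k else k.+1) <= j)%N -> s0 k t a j = 0),
      (0 < t -> forall j : 'I_d, nat_of_ord j = k ->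
         s0 k t a j <= t / k%:R * \sum_(i < d | (i < k)%N) s0 k t a i) &
      qform (Pomega R d) (vec_of A) =
        ((Num.sqrt (d%:R : R))^-1 ^+ 2 * ((k%:R + t) ^+ 2 / (k%:R + t ^+ 2)))%:C].
Proof.
move=> hk1 hkd ht0 ht1 hkt a A.
have hkR : 1 <= k%:R :> R by rewrite ler1n.
have hp : 0 < k%:R + t ^+ 2 :> R by have := sqr_ge0 t; lra.
have ha : 0 < a by rewrite /a invr_gt0 sqrtr_gt0.
have ha2 : a ^+ 2 = (k%:R + t ^+ 2)^-1.
  by rewrite /a exprVn sqr_sqrtr // ltW.
have hta : t * a <= a by rewrite -[X in _ <= X]mul1r; apply: ler_wpM2r; lra.
have hta0 : 0 <= t * a by apply: mulr_ge0; lra.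
have s0ge : forall i, 0 <= s0 k t a i.
  by move=> i; rewrite /s0; case: ifP => _; [lra | case: ifP => _ //; lra].
have s0le : forall i, s0 k t a i <= a.
  by move=> i; rewrite /s0; case: ifP => _; [lra | case: ifP => _ //; lra].
have hsum_sq := @s0_sum k t a (fun x => x ^+ 2) (expr0n _ _) hkd hkt ht0.
have hsum_id := @s0_sum k t a id erefl hkd hkt ht0.
rewrite /= in hsum_sq hsum_id.
split.
- have e : k%:R * a ^+ 2 + (t * a) ^+ 2 = 1.
    rewrite exprMn ha2; field; apply/eqP => e; rewrite e in hp; lra.
  by rewrite qform_vec1 /A Dg_sq tr_Dg hsum_sq e.
- split; [|split].
  + move=> i j hij; rewrite /s0.
    case: (ltnP i k) => hi; first by apply: s0le.
    have hj : (k <= j)%N by apply: leq_trans hij.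
    rewrite ltnNge hj /=.
    case: (eqVneq (i : nat) k) => hik.
      by case: ifP => _; lra.
    have -> : (j == k :> nat) = false by apply/negbTE; rewrite neq_ltn; apply/orP; right; apply: leq_trans hij; rewrite ltn_neqAle eq_sym hik hi.
    by [].
  + exact: s0ge.
  + rewrite /A Dg_sq char_poly_trig ?diag_mx_is_trig //.
    by apply: eq_bigr => i _; rewrite !mxE eqxx mulr1n.
- move=> j; rewrite /s0; case: ifP => ht.
    move/eqP: ht => -> hj; rewrite ltnNge hj /=; case: ifP => _ //; by rewrite mul0r.
  move=> hj; rewrite ltnNge (leq_trans (leqnSn k) hj) /=.
  have -> : (j == k :> nat) = false.
    by apply/negbTE; rewrite neq_ltn; apply/orP; right.
  done.
- move=> tp j hj; rewrite /s0 hj ltnn eqxx.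
  have -> : \sum_(i < d | (i < k)%N) s0 k t a i = k%:R * a.
    rewrite -(@sum_lt_const R d k a hkd); apply: eq_bigr => i hi.
    by rewrite /s0 hi.
  rewrite mulrA divfK //; apply/eqP => e; rewrite e in hkR; lra.
- rewrite qformP /A tr_Dg hsum_id.
  simpc; apply/eqP; rewrite eq_complex /= eqxx andbT; apply/eqP.
  congr (_ * _); rewrite -mulrDl -expr2 exprMn ha2 //.
Qed.

End Main.

Lemma qform_OmP (R : realType) (d : nat) (psi : 'cV[R[i]]_(d * d)) : (0 < d)%N ->
  qform (Om R d *m adjmx (Om R d)) psi = (d%:R : R)%:C * qform (Pomega R d) psi.
Proof.
move=> hd; rewrite PomegaE qformZ mulrA -rmorphM exprVn sqr_sqrtr ?ler0n //.
rewrite mulfV ?rmorph1 ?mul1r // pnatr_eq0 -lt0n //.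
Qed.

Theorem corollary4p8 (R : realType) (d : nat) (hd : (2 <= d)%N)
    (alpha : R) (h1 : 1 <= alpha) (hd' : alpha <= d%:R) :
  is_mu alpha (Pomega R d) (1 / (d%:R * tstar alpha)) /\
  (forall f : R, is_mu alpha (Pomega R d) f ->
     forall t : R, 0 < t -> t <= 1 ->
       (@in_P R d alpha (@Phi_t R d t) <-> t <= 1 / (d%:R * f))).
Proof.
have ha0 : 0 <= alpha by lra.
have /andP[hkl hku] := truncn_itv ha0.
have hk1 : (1 <= kfl alpha)%N by rewrite /kfl truncn_gt0.
have hkd : (kfl alpha <= d)%N by rewrite -(ler_nat R); rewrite /kfl; lra.
have ht0 : 0 <= theta alpha by rewrite /theta /kfl; lra.
have ht1 : theta alpha < 1 by rewrite /theta /kfl; rewrite -natr1 in hku; lra.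
have hkt : 0 < theta alpha -> (kfl alpha < d)%N.
  by move=> htp; rewrite -(ltr_nat R); move: htp; rewrite /theta /kfl; lra.
have hd0 : (0 < d)%N by apply: leq_trans hd.
have hdR : 0 < d%:R :> R by rewrite ltr0n.
have hkR : 1 <= (kfl alpha)%:R :> R by rewrite ler1n.
set k := kfl alpha in hk1 hkd hkt hkR *.
set th := theta alpha in ht0 ht1 hkt *.
have hm0 : 1 / (d%:R * tstar alpha) =
   (Num.sqrt (d%:R : R))^-1 ^+ 2 * ((k%:R + th) ^+ 2 / (k%:R + th ^+ 2)).
  rewrite /tstar -/k -/th exprVn sqr_sqrtr ?ler0n //.
  have : 0 <= th ^+ 2 by apply: sqr_ge0.
  move=> ?; field; apply/and3P; split; apply/eqP; lra.
have hmu : is_mu alpha (Pomega R d) (1 / (d%:R * tstar alpha)).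
  split.
    have [w1 w2 w3 w4 w5] := @witness R d k th hk1 hkd ht0 ht1 hkt.
    set a := (Num.sqrt (k%:R + th ^+ 2))^-1 in w1 w2 w3 w4 w5.
    exists (vec_of (Dg (s0 k th a))); split; last by rewrite w5 hm0.
    split; first exact: w1.
    exists (Dg (s0 k th a)), (s0 k th a).
    by split; [reflexivity | split; [exact: w2 | split; [exact: w3 | exact: w4]]].
  move=> psi [q1 [A [s [hpsi [hsc [hz hth]]]]]].
  rewrite hm0; exact: (@upper R d k th psi A s hk1 hkd ht0 ht1 hkt q1 hpsi hsc hz hth).
split; first exact: hmu.
set m0 := 1 / (d%:R * tstar alpha) in hmu hm0 *.
have hm0p : 0 < m0.
  rewrite hm0; apply: mulr_gt0.
    by rewrite exprn_gt0 // invr_gt0 sqrtr_gt0.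
  apply: divr_gt0; first by apply: exprn_gt0; lra.
  have : 0 <= th ^+ 2 by apply: sqr_ge0.
  move=> ?; lra.
move=> f hf t htp ht1'.
have hfm : f = m0.
  case: hf => [[p1 [ad1 e1]] hub1]; case: hmu => [[p2 [ad2 e2]] hub2].
  apply/eqP; rewrite eq_le; apply/andP; split.
    by rewrite -lecR -e1; apply: hub2.
  by rewrite -lecR -e2; apply: hub1.
subst f.
case: hmu => [[p1 [ad1 e1]] hub].
split.
  case=> _ hpos; have := hpos p1 ad1.
  rewrite choiE qformB qformZ qform_OmP // e1; case: ad1 => -> _.
  rewrite -rmorphM -[in X in X - _](rmorph1 (real_complex R)) -rmorphM -rmorphB lecR.
  rewrite subr_ge0 => hle; rewrite ler_pdivlMr; last exact: mulr_gt0.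
  exact: hle.
move=> hle; split; first exact: herm_Phi.
move=> psi hadm; rewrite choiE qformB qformZ qform_OmP //.
have hq := hub psi hadm.
case: hadm => -> _.
set q := qform (Pomega R d) psi in hq *.
have -> : 1 - t%:C * ((d%:R : R)%:C * q) =
  (1 - t * d%:R * m0)%:C + (t * d%:R)%:C * (m0%:C - q).
  by rewrite rmorphB rmorph1 !rmorphM; ring.
apply: addr_ge0.
  rewrite lecR subr_ge0.
  rewrite ler_pdivlMr in hle; last exact: mulr_gt0.
  by rewrite -mulrA.
apply: mulr_ge0; first by rewrite lecR mulr_ge0 // ?ler0n; lra.
by rewrite subr_ge0.
Qed.
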